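(* There is an absolute constant $C>0$ such that the following holds. Let $K\ge1$, let $\mathbf{\Phi}\in\mathbb{R}^{m\times n}$ satisfy the RIP of order $2K$ with $\delta_{2K}\in(0,1)$, let $\mathbf{x}\in\mathbb{R}^n$ have exactly $K$ nonzero entries, all of equal magnitude, let $\mathbf{v}\in\mathbb{R}^m$, and $\mathbf{y}=\mathbf{\Phi}\mathbf{x}+\mathbf{v}$. If $\mathrm{SNR}\ge\delta_{2K}^{-3/2}$, then the support $\mathcal{T}^K$ output by OMP after $K$ iterations satisfies $\frac{|\mathcal{T}^K\setminus\mathrm{supp}(\mathbf{x})|}{K} \le C\,\delta_{2K}^{1/2}$.
   Context: $\phi_i$ is the $i$-th column of $\mathbf{\Phi}$. RIP: for an integer $s\ge1$, the isometry constant $\delta_s$ of $\mathbf{\Phi}$ is the smallest $c\in[0,1)$ such that $(1-c)\|\mathbf{z}\|_2^2 \le \|\mathbf{\Phi}\mathbf{z}\|_2^2 \le (1+c)\|\mathbf{z}\|_2^2$ for all $s$-sparse $\mathbf{z}$. $\mathrm{SNR} := \|\mathbf{\Phi}\mathbf{x}\|_2^2/\|\mathbf{v}\|_2^2$. OMP with input $\mathbf{\Phi},\mathbf{y},K$: set $\mathcal{T}^0=\emptyset$, $\mathbf{r}^0=\mathbf{y}$; for $k=1,\dots,K$: choose $t^k \in \arg\max_{i\notin\mathcal{T}^{k-1}} |\langle\phi_i,\mathbf{r}^{k-1}\rangle|$ (ties broken arbitrarily), set $\mathcal{T}^k=\mathcal{T}^{k-1}\cup\{t^k\}$, $\mathbf{x}^k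 = \arg\min_{\mathrm{supp}(\mathbf{u})\subseteq\mathcal{T}^k}\|\mathbf{y}-\mathbf{\Phi}\mathbf{u}\|_2$, $\mathbf{r}^k=\mathbf{y}-\mathbf{\Phi}\mathbf{x}^k$. Output $\mathcal{T}^K$, $\mathbf{x}^K$. *)

(* Defs.v *)
(* R is an arbitrary real closed field (standing for the reals). *)
From HB Require Import structures.
From mathcomp Require Import all_boot all_order all_algebra.
Set Implicit Arguments. Unset Strict Implicit. Unset Printing Implicit Defensive.
Import Order.TTheory GRing.Theory Num.Theory.
Local Open Scope ring_scope.

Section OMPDefs.
Variable R : rcfType.

Definition norm2sq (m : nat) (z : 'cV[R]_m) : R := \sum_(i < m) (z i 0) ^+ 2.

Definition supp (n : nat) (z : 'cV[R]_n) : {set 'I_n} := [set i | z i 0 != 0].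

Definition sparse (n s : nat) (z : 'cV[R]_n) : Prop := (#|supp z| <= s)%N.

Definition rip_ineq (m n : nat) (Phi : 'M[R]_(m, n)) (s : nat) (c : R) : Prop :=
  forall z : 'cV[R]_n, sparse s z ->
    (1 - c) * norm2sq z <= norm2sq (Phi *m z) /\
    norm2sq (Phi *m z) <= (1 + c) * norm2sq z.

Definition is_isometry_const (m n : nat) (Phi : 'M[R]_(m, n)) (s : nat) (d : R) : Prop :=
  0 <= d < 1 /\ rip_ineq Phi s d /\
  forall c : R, 0 <= c < 1 -> rip_ineq Phi s c -> d <= c.

Definition corr (m n : nat) (Phi : 'M[R]_(m, n)) (i : 'I_n) (r : 'cV[R]_m) : R :=
  \sum_(j < m) Phi j i * r j 0.

Definition ls_min (m n : nat) (Phi : 'M[R]_(m, n)) (y : 'cV[R]_m)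
    (S : {set 'I_n}) (u : 'cV[R]_n) : Prop :=
  (forall i, i \notin S -> u i 0 = 0) /\
  forall w : 'cV[R]_n, (forall i, i \notin S -> w i 0 = 0) ->
    norm2sq (y - Phi *m u) <= norm2sq (y - Phi *m w).

(* T = [:: t^1; ...; t^K] is the list of indices chosen by some run of OMP
   (ties broken arbitrarily) on input Phi, y, K.  At step k+1, T^k is the set of
   the first k chosen indices, x^k a least-squares solution on T^k and r^k = y - Phi x^k. *)
Definition omp_run (m n : nat) (Phi : 'M[R]_(m, n)) (y : 'cV[R]_m) (K : nat)
    (T : seq 'I_n) : Prop :=
  size T = K /\
  forall k : nat, (k < K)%N ->
    exists xk : 'cV[R]_n,
      ls_min Phi y [set i in take k T] xk /\
      forall t0 : 'I_n, let t := nth t0 T k in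
        t \notin take k T /\
        forall i : 'I_n, i \notin take k T ->
          `|corr Phi i (y - Phi *m xk)| <= `|corr Phi t (y - Phi *m xk)|.

End OMPDefs.

(* Main.v *)
Require Import Defs.
From HB Require Import structures.
From mathcomp Require Import all_boot all_order all_algebra.
From mathcomp Require Import ring lra zify.
Import Order.TTheory GRing.Theory Num.Theory.
Set Implicit Arguments. Unset Strict Implicit. Unset Printing Implicit Defensive.
Local Open Scope ring_scope.


Section Aux.
Variable R : rcfType.

Definition dot (m : nat) (a b : 'cV[R]_m) : R := \sum_(j < m) a j 0 * b j 0.

Lemma norm2sqE m (a : 'cV[R]_m) : norm2sq a = dot a a.
Proof. by apply: eq_bigr => j _; rewrite expr2. Qed.

Lemma norm2sq_ge0 m (a : 'cV[R]_m) : 0 <= norm2sq a.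
Proof. by apply: sumr_ge0 => j _; apply: sqr_ge0. Qed.

Lemma dotC m (a b : 'cV[R]_m) : dot a b = dot b a.
Proof. by apply: eq_bigr => j _; rewrite mulrC. Qed.

Lemma dotDl m (a b c : 'cV[R]_m) : dot (a + b) c = dot a c + dot b c.
Proof. by rewrite /dot -big_split; apply: eq_bigr => j _; rewrite !mxE mulrDl. Qed.

Lemma dotNl m (a c : 'cV[R]_m) : dot (- a) c = - dot a c.
Proof. by rewrite /dot -sumrN; apply: eq_bigr => j _; rewrite !mxE mulNr. Qed.

Lemma dotZl m (k : R) (a c : 'cV[R]_m) : dot (k *: a) c = k * dot a c.
Proof. by rewrite /dot mulr_sumr; apply: eq_bigr => j _; rewrite !mxE mulrA. Qed.

Lemma norm2sqD m (a b : 'cV[R]_m) :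
  norm2sq (a + b) = norm2sq a + 2 * dot a b + norm2sq b.
Proof.
rewrite !norm2sqE dotDl dotC dotDl (dotC b a) [dot b (a + b)]dotC dotDl.
rewrite (dotC a b); ring.
Qed.

Lemma norm2sqB m (a b : 'cV[R]_m) :
  norm2sq (a - b) = norm2sq a - 2 * dot b a + norm2sq b.
Proof.
rewrite norm2sqD !norm2sqE.
have -> : dot a (- b) = - dot b a by rewrite dotC dotNl.
have -> : dot (- b) (- b) = dot b b by rewrite dotNl dotC dotNl opprK.
ring.
Qed.

Lemma norm2sqZ m (k : R) (a : 'cV[R]_m) : norm2sq (k *: a) = k ^+ 2 * norm2sq a.
Proof. rewrite !norm2sqE dotZl dotC dotZl; ring. Qed.

Lemma dot_amgm m (a b : 'cV[R]_m) (t : R) : 0 < t ->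
  - (t * norm2sq a + norm2sq b / t) <= 2 * dot a b.
Proof.
move=> t0.
have := norm2sq_ge0 (t *: a + b).
rewrite norm2sqD norm2sqZ dotZl => H.
have ti : t * t^-1 = 1 by rewrite mulfV // gt_eqF.
have H2 : 0 <= t^-1 by rewrite invr_ge0 ltW.
have := mulr_ge0 H2 H.
set N1 := norm2sq a; set N2 := norm2sq b; set D := dot a b => H3.
have : t^-1 * (t ^+ 2 * N1 + 2 * (t * D) + N2) = t * N1 + 2 * D + N2 / t.
  by field; rewrite gt_eqF.
move=> E; rewrite E in H3; lra.
Qed.

Lemma corrE m n (Phi : 'M[R]_(m, n)) i r : corr Phi i r = dot (Phi *m delta_mx i 0) r.
Proof. by rewrite /corr /dot -colE; apply: eq_bigr => j _; rewrite !mxE. Qed.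

Lemma sum_corr m n (Phi : 'M[R]_(m, n)) (z : 'cV[R]_n) r :
  \sum_i z i 0 * corr Phi i r = dot (Phi *m z) r.
Proof.
rewrite /dot /corr.
under eq_bigr => i _ do rewrite mulr_sumr.
rewrite exchange_big /=; apply: eq_bigr => j _.
by rewrite !mxE mulr_suml; apply: eq_bigr => i _; rewrite mulrA (mulrC (z i 0)).
Qed.

End Aux.

Lemma dot_amgm_up (R : rcfType) m (a b : 'cV[R]_m) (t : R) : 0 < t ->
  2 * dot a b <= t * norm2sq a + norm2sq b / t.
Proof.
move=> t0; have := dot_amgm a (- b) t0.
have -> : norm2sq (- b) = norm2sq b by rewrite -scaleN1r norm2sqZ sqrrN expr1n mul1r.
have -> : dot a (- b) = - dot a b by rewrite dotC dotNl dotC.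
move=> h; rewrite -[X in X <= _]opprK -[X in _ <= X]opprK lerN2.
by rewrite -mulrN.
Qed.


Lemma step_core (R : rcfType) (s A a0 g K q E2 d V X M : R) :
 0 < s -> s < 1 -> A = a0^+2 -> 0 < a0 -> 1 <= g -> 0 <= K -> K <= q^+2 * g -> 0 < q -> 0 <= M ->
 (1 - s) * g * A <= E2 -> V <= 2 * s^+3 * K * A ->
 - (s * q * E2 + V / (s * q)) <= 2 * d ->
 X = E2 + d -> X <= g * a0 * M ->
 A * (1 - 2*s - 3*s*q) <= M^+2.
Proof.
move=> s0 s1 -> a00 g1 K0 Kq q0 M0 hE hV hd hX hXM.
set t := s * q.
have t0 : 0 < t by rewrite /t mulr_gt0.
have A0 : 0 < a0 ^+ 2 by rewrite exprn_gt0.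
case: (lerP (1 - s - 3/2 * t) 0) => hp.
  apply: le_trans (sqr_ge0 M); rewrite pmulr_rle0 //; rewrite /t in hp; lra.
set p := 1 - s - 3 / 2 * t.
have ht : t < 2 by rewrite /t in hp *; lra.
have hVt : V / t <= 2 * t * g * a0 ^+ 2.
  rewrite ler_pdivrMr //.
  have : 2 * s^+3 * K * a0^+2 <= 2 * t * g * a0 ^+ 2 * t.
    rewrite /t.
    have : s ^+ 3 * K <= s * q * g * (s * q).
      have -> : s * q * g * (s * q) = s ^+ 2 * (q ^+ 2 * g) by ring.
      have hk : s * K <= q ^+ 2 * g by nra.
      have -> : s ^+ 3 * K = s ^+ 2 * (s * K) by ring.
      by apply: ler_wpM2l => //; apply: sqr_ge0.
    move=> h; nra.
  lra.
have hX2 : g * a0 ^+ 2 * p <= X.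
  rewrite hX.
  have h1 : (1 - s) * g * a0 ^+ 2 * (1 - t / 2) <= E2 * (1 - t/2).
    apply: ler_wpM2r => //; lra.
  have h2 : g * a0 ^+ 2 * p <= (1 - s) * g * a0 ^+ 2 * (1 - t / 2) - t * g * a0 ^+ 2.
    rewrite /p.
    have hg : 0 <= g * a0 ^+ 2 by apply: mulr_ge0; lra.
    have : 0 <= g * a0 ^+ 2 * (s * t / 2) by apply: mulr_ge0 => //; apply: divr_ge0 => //; apply: mulr_ge0; lra.
    have -> : (1 - s) * g * a0 ^+ 2 * (1 - t / 2) - t * g * a0 ^+ 2 =
      g * a0 ^+ 2 * (1 - s - 3 / 2 * t) + g * a0 ^+ 2 * (s * t / 2) by field.
    lra.
  rewrite -/t in hd. lra.
have hM : a0 * p <= M.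
  have : g * a0 ^+ 2 * p <= g * a0 * M by lra.
  rewrite expr2 -!mulrA !ler_pM2l //; lra.
have p0 : 0 < p by [].
have ha0 : 0 <= a0 by lra.
have : (a0 * p) ^+ 2 <= M ^+ 2 by rewrite ler_sqr // ?nnegrE ?(mulr_ge0 ha0 (ltW p0)).
rewrite exprMn => h.
have : a0 ^+ 2 * (1 - 2 * s - 3 * s * q) <= a0 ^+ 2 * p ^+ 2.
  apply: ler_wpM2l; first lra.
  rewrite /p /t; nra.
lra.
Qed.


Lemma sqrt_step (R : rcfType) (a b : R) : 0 <= a -> 0 < b -> b ^+ 2 = a ^+ 2 + 1 ->
  b^-1 + 2 * a <= 2 * b.
Proof.
move=> a0 b0 hb.
have h1 : 0 < 2 * a ^+ 2 + 1 - 2 * a * b.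
  have hprod : (2 * a ^+ 2 + 1 - 2 * a * b) * (2 * a ^+ 2 + 1 + 2 * a * b) = 1.
    have -> : (2 * a ^+ 2 + 1 - 2 * a * b) * (2 * a ^+ 2 + 1 + 2 * a * b) =
      (2 * a ^+ 2 + 1) ^+ 2 - 4 * a ^+ 2 * b ^+ 2 by ring.
    rewrite hb; ring.
  have hpos : 0 < 2 * a ^+ 2 + 1 + 2 * a * b.
    have : 0 <= a * b by apply: mulr_ge0; lra.
    have : 0 <= a ^+ 2 by apply: sqr_ge0.
    lra.
  case: (ltrP 0 (2 * a ^+ 2 + 1 - 2 * a * b)) => // hn.
  have : (2 * a ^+ 2 + 1 - 2 * a * b) * (2 * a ^+ 2 + 1 + 2 * a * b) <= 0.
    by rewrite pmulr_lle0.
  lra.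
have : b^-1 <= 2 * b - 2 * a.
  rewrite -[b^-1]mul1r ler_pdivrMr //.
  have -> : (2 * b - 2 * a) * b = 2 * b ^+ 2 - 2 * a * b by ring.
  rewrite hb; lra.
lra.
Qed.

Lemma sqrt_sum (R : rcfType) (K : nat) :
  \sum_(j < K) (Num.sqrt (K - j)%:R : R)^-1 <= 2 * Num.sqrt (K%:R).
Proof.
elim: K => [|K IH]; first by rewrite big_ord0 sqrtr0 mulr0.
rewrite big_ord_recl subn0.
under eq_bigr => j _ do rewrite lift0 subSS.
apply: le_trans (lerD (lexx _) IH) _.
apply: sqrt_step; first exact: sqrtr_ge0.
  by rewrite sqrtr_gt0 ltr0n.
by rewrite !sqr_sqrtr ?ler0n // -natr1.
Qed.

Lemma sum_b (R : rcfType) (K : nat) (s : R) : 0 <= s ->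
  K%:R * (1 - 8 * s) <=
  \sum_(j < K) (1 - 2 * s - 3 * s * (Num.sqrt (K%:R : R) / Num.sqrt ((K - j)%N%:R))).
Proof.
move=> s0.
rewrite sumrB sumr_const card_ord.
rewrite -[(1 - 2 * s) *+ K]mulr_natl.
have hS := sqrt_sum R K.
have hsum : \sum_(i < K) 3 * s * (Num.sqrt (K%:R : R) / Num.sqrt ((K - i)%N%:R)) =
   3 * s * Num.sqrt (K%:R) * \sum_(j < K) (Num.sqrt (K - j)%:R : R)^-1.
  by rewrite mulr_sumr; apply: eq_bigr => j _; rewrite mulrA.
rewrite hsum.
set Q := \sum_(j < K) _ in hS *.
have hK : Num.sqrt (K%:R : R) ^+ 2 = K%:R by rewrite sqr_sqrtr // ler0n.
have hsK : 0 <= Num.sqrt (K%:R : R) by apply: sqrtr_ge0.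
have : 3 * s * Num.sqrt K%:R * Q <= 3 * s * Num.sqrt K%:R * (2 * Num.sqrt K%:R).
  by apply: ler_wpM2l => //; apply: mulr_ge0 => //; apply: mulr_ge0 => //; lra.
have -> : 3 * s * Num.sqrt (K%:R : R) * (2 * Num.sqrt K%:R) = 6 * s * Num.sqrt (K%:R : R) ^+ 2 by ring.
rewrite hK => h.
have -> : K%:R * (1 - 8 * s) = K%:R * (1 - 2 * s) - 6 * s * K%:R by ring.
lra.
Qed.


Lemma normal_real (R : rcfType) (c N : R) :
  0 <= N -> (forall e, 0 <= - (2 * (e * c)) + e ^+ 2 * N) -> c = 0.
Proof.
move=> N0 H.
set h := (N + 1)^-1.
have h0 : 0 < h by rewrite invr_gt0; lra.
have hN : h * N < 1.
  rewrite /h mulrC -/(N / (N + 1)) ltr_pdivrMr; lra.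
have := H (c * h).
have -> : - (2 * (c * h * c)) + (c * h) ^+ 2 * N = c ^+ 2 * h * (h * N - 2) by ring.
move=> H2.
have hc : 0 <= c ^+ 2 * h by apply: mulr_ge0 => //; [apply: sqr_ge0 | lra].
have : c ^+ 2 * h <= 0.
  have : c ^+ 2 * h * (h * N - 2) <= - (c ^+ 2 * h) by nra.
  lra.
move=> h3.
have : c ^+ 2 = 0.
  apply/eqP; rewrite eq_le sqr_ge0 andbT.
  by rewrite -(pmulr_rle0 _ h0) mulrC.
by move/eqP; rewrite sqrf_eq0 => /eqP.
Qed.

Lemma decrease_real (R : rcfType) (c N D Rk : R) :
  0 <= N -> N <= D -> 0 < D ->
  Rk - 2 * (c / D * c) + (c / D) ^+ 2 * N <= Rk - c ^+ 2 / D.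
Proof.
move=> N0 ND D0.
have : (c / D) ^+ 2 * N <= (c / D) ^+ 2 * D by apply: ler_wpM2l => //; apply: sqr_ge0.
have -> : (c / D) ^+ 2 * D = c ^+ 2 / D by field; rewrite gt_eqF.
have -> : c / D * c = c ^+ 2 / D by rewrite expr2 mulrAC.
lra.
Qed.

Lemma final_arith (R : rcfType) (s A Kr wc P V E2 Nz Ny Nres SB : R) :
  0 < s -> s < 1 -> 0 < A -> 0 < Kr -> 0 <= wc -> wc <= Kr -> 0 <= V -> 0 <= Nz ->
  V <= s ^+ 3 * P -> P <= (1 + s ^+ 2) * Kr * A ->
  (1 - s) * E2 - V / s <= Nres -> (1 - s ^+ 2) * Nz <= E2 -> wc * A <= Nz ->
  Ny <= P + s * P + V / s + V -> Nres <= Ny - (1 - s) * A * SB ->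
  Kr * (1 - 8 * s) <= SB ->
  wc <= 20 * s * Kr.
Proof.
move=> s0 s1 A0 K0 w0 wK V0 Nz0 hV hP hR hE hN hY hRes hSB.
have P0 : 0 <= P.
  have : 0 <= s ^+ 3 * P by lra.
  by rewrite pmulr_rge0 // exprn_gt0.
have hVs : V / s <= s ^+ 2 * P.
  rewrite ler_pdivrMr //.
  by have -> : s ^+ 2 * P * s = s ^+ 3 * P by ring.
have Vs0 : 0 <= V / s by apply: divr_ge0 => //; lra.
have hss : s ^+ 2 <= s by rewrite expr2; nra.
have hs3 : s ^+ 3 <= s.
  have -> : s ^+ 3 = s * s ^+ 2 by ring.
  nra.
have hV2 : V <= s * P by nra.
have KA : 0 <= Kr * A by apply: mulr_ge0; lra.
have hP2 : P <= (1 + s) * Kr * A by nra.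
have hY2 : Ny <= (1 + 7 * s) * Kr * A.
  have : Ny <= P * (1 + 3 * s) by nra.
  move=> h; nra.
have hE2 : (1 - s) * (wc * A) <= E2 by nra.
have hR2 : wc * A - 4 * s * Kr * A <= Nres.
  have wA : 0 <= wc * A by apply: mulr_ge0; lra.
  have : (1 - s) * ((1 - s) * (wc * A)) <= (1 - s) * E2 by apply: ler_wpM2l; lra.
  move=> h.
  have : s ^+ 2 * P <= 2 * s * Kr * A by nra.
  move=> h2.
  have : wc * A <= Kr * A by apply: ler_wpM2r; lra.
  move=> h3; nra.
have hS2 : Kr * A * (1 - 9 * s) <= (1 - s) * A * SB.
  have : (1 - s) * A * (Kr * (1 - 8 * s)) <= (1 - s) * A * SB.
    by apply: ler_wpM2l => //; apply: mulr_ge0; lra.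
  move=> h; nra.
have : wc * A <= (20 * s * Kr) * A by nra.
by rewrite ler_pM2r.
Qed.

Lemma aux_E2 (R : rcfType) (s delta gA Nz E2 : R) :
  0 <= gA -> gA <= Nz -> delta <= s -> delta < 1 -> (1 - delta) * Nz <= E2 ->
  (1 - s) * gA <= E2.
Proof. move=> *; nra. Qed.

Lemma aux_V (R : rcfType) (s delta Kr A V P : R) :
  0 < s -> 0 <= Kr * A -> delta < 1 -> V <= s ^+ 3 * P -> P <= (1 + delta) * (Kr * A) ->
  V <= 2 * s ^+ 3 * Kr * A.
Proof.
move=> s0 KA d1 hV hP.
have s3 : 0 < s ^+ 3 by rewrite exprn_gt0.
have : s ^+ 3 * P <= s ^+ 3 * (2 * (Kr * A)).
  by apply: ler_wpM2l; [lra | nra].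
move=> h; have -> : 2 * s ^+ 3 * Kr * A = s ^+ 3 * (2 * (Kr * A)) by ring.
lra.
Qed.

Lemma aux_q (R : rcfType) (K k : nat) (g : R) : (k < K)%N -> (K - k)%:R <= g ->
  K%:R <= (Num.sqrt (K%:R : R) / Num.sqrt ((K - k)%N%:R)) ^+ 2 * g.
Proof.
move=> hk hg.
have hp : (0 : R) < (K - k)%N%:R by rewrite ltr0n subn_gt0.
rewrite exprMn exprVn !sqr_sqrtr ?ler0n //.
apply: le_trans (_ : K%:R / (K - k)%N%:R * (K - k)%N%:R <= _).
  by rewrite divfK // gt_eqF.
by apply: ler_wpM2l => //; apply: divr_ge0; rewrite ler0n.
Qed.

Lemma aux_q0 (R : rcfType) (K k : nat) : (k < K)%N ->
  0 < Num.sqrt (K%:R : R) / Num.sqrt ((K - k)%N%:R).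
Proof.
move=> hk; apply: divr_gt0; rewrite sqrtr_gt0 ltr0n //; last by rewrite subn_gt0.
by apply: leq_ltn_trans hk.
Qed.

Lemma aux_res (R : rcfType) (s E2 d V : R) : 0 < s -> 0 <= V ->
  - (s * E2 + V / s) <= 2 * d -> (1 - s) * E2 - V / s <= E2 + 2 * d + V.
Proof. move=> *; lra. Qed.


Section Mx.
Variable R : rcfType.

Lemma resid_shift m n (Phi : 'M[R]_(m, n)) (y : 'cV[R]_m) u (e : R) i :
  y - Phi *m (u + e *: delta_mx i 0) = (y - Phi *m u) - e *: (Phi *m delta_mx i 0).
Proof. by rewrite mulmxDr -scalemxAr opprD addrA. Qed.

Lemma sum_if n (B : {set 'I_n}) (c : R) :
  \sum_i (if i \in B then c else 0) = #|B|%:R * c.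
Proof. by rewrite -big_mkcond sumr_const mulr_natl. Qed.

Lemma norm_delta n (t : 'I_n) : norm2sq (delta_mx t 0 : 'cV[R]_n) = 1.
Proof.
rewrite /norm2sq (bigD1 t) //= big1 => [|j hj]; first by rewrite !mxE !eqxx expr1n addr0.
by rewrite !mxE (negbTE hj) /= expr0n.
Qed.

Lemma sparse_sub n s (z : 'cV[R]_n) (U : {set 'I_n}) :
  (forall i, i \notin U -> z i 0 = 0) -> (#|U| <= s)%N -> sparse s z.
Proof.
move=> hz hU; rewrite /sparse; apply: leq_trans hU; apply: subset_leq_card.
apply/subsetP => i; rewrite inE; apply: contraR => hi; by rewrite hz.
Qed.

End Mx.

Theorem corollary1 (R : rcfType) :
  exists C : R, 0 < C /\
  forall (m n K : nat) (Phi : 'M[R]_(m, n)) (delta : R)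
         (x : 'cV[R]_n) (v : 'cV[R]_m) (T : seq 'I_n),
    (1 <= K)%N ->
    is_isometry_const Phi (2 * K) delta ->
    0 < delta < 1 ->
    #|supp x| = K ->
    (forall i j, i \in supp x -> j \in supp x -> `|x i 0| = `|x j 0|) ->
    (* SNR = ||Phi x||^2 / ||v||^2 >= delta^(-3/2)  (SNR = +oo when v = 0) *)
    (delta * Num.sqrt delta)^-1 * norm2sq v <= norm2sq (Phi *m x) ->
    omp_run Phi (Phi *m x + v) K T ->
    (#|[set i in T] :\: supp x|%:R / K%:R) <= C * Num.sqrt delta.
Proof.
exists 20; split; first lra.
move=> m n K Phi delta x v T hK [/andP[d0 d1] [rip _]] /andP[dpos dlt1] hS heq hsnr [hsize hrun].
set s := Num.sqrt delta.
have s0 : 0 < s by rewrite sqrtr_gt0.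
have ss : s ^+ 2 = delta by rewrite sqr_sqrtr // ltW.
have d1p : 0 < 1 + delta by lra.
have s1 : s < 1 by rewrite -ss in dlt1; nra.
have dles : delta <= s by rewrite -ss expr2; nra.
set S := supp x.
have [i0 hi0] : exists i0, i0 \in S by apply/card_gt0P; rewrite hS.
set a0 := `|x i0 0|.
have a00 : 0 < a0 by rewrite normr_gt0; move: hi0; rewrite inE.
set A := a0 ^+ 2.
have A0 : 0 < A by rewrite exprn_gt0.
have hx2 : forall i, x i 0 ^+ 2 = if i \in S then A else 0.
  move=> i; case: ifP => hi.
    by rewrite /A /a0 -(heq _ _ hi hi0) real_normK // num_real.
  by move: hi; rewrite inE => /negbT; rewrite negbK => /eqP ->; rewrite expr0n.
have hxS : forall i, i \notin S -> x i 0 = 0.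
  by move=> i; rewrite inE negbK => /eqP.
have hxn : norm2sq x = K%:R * A.
  by rewrite /norm2sq; under eq_bigr => i _ do rewrite hx2; rewrite sum_if hS.
have ripL : forall z, sparse (2 * K) z -> (1 - delta) * norm2sq z <= norm2sq (Phi *m z).
  by move=> z hz; case: (rip z hz).
have ripU : forall z, sparse (2 * K) z -> norm2sq (Phi *m z) <= (1 + delta) * norm2sq z.
  by move=> z hz; case: (rip z hz).
have lowz : forall (z : 'cV[R]_n) (B : {set 'I_n}), (forall i, i \in B -> z i 0 = x i 0) ->
    B \subset S -> #|B|%:R * A <= norm2sq z.
  move=> z B hzB hBS; rewrite -sum_if /norm2sq; apply: ler_sum => i _.
  case: ifP => hi; last exact: sqr_ge0.
  by rewrite hzB // hx2 (subsetP hBS _ hi).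
set P := norm2sq (Phi *m x).
set V := norm2sq v.
have V0 : 0 <= V := norm2sq_ge0 v.
have hxsp : sparse (2 * K) x.
  by rewrite /sparse -/S hS leq_pmull.
have hP : P <= (1 + delta) * (K%:R * A) by rewrite -hxn; apply: ripU.
have hV : V <= s ^+ 3 * P.
  have hds : 0 < delta * s by apply: mulr_gt0.
  rewrite -ler_pdivrMl; last by rewrite exprn_gt0.
  by have -> : s ^+ 3 = delta * s by rewrite -ss; ring.
set y := Phi *m x + v.
set q := fun j : nat => Num.sqrt (K%:R : R) / Num.sqrt ((K - j)%N%:R).
set b := fun j : nat => 1 - 2 * s - 3 * s * q j.
have inv : forall k, (k <= K)%N -> exists w : 'cV[R]_n,
    (forall i, i \notin [set i in take k T] -> w i 0 = 0) /\
    norm2sq (y - Phi *m w) <= norm2sq y - (1 - s) * A * \sum_(j < k) b j.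
  elim=> [|k IH] hk.
    exists 0; split; first by move=> i _; rewrite mxE.
    by rewrite mulmx0 subr0 big_ord0 mulr0 subr0.
  have [w [wsupp wbound]] := IH (ltnW hk).
  have [xk [[xsupp xmin] hch]] := hrun k hk.
  set r := y - Phi *m xk.
  have hR : norm2sq r <= norm2sq (y - Phi *m w) := xmin w wsupp.
  move: (hch i0) => /= [tnot hmax].
  set t := nth i0 T k in tnot hmax.
  set Tk := [set i in take k T] in xsupp xmin wsupp.
  have hnorm : forall i, i \in take k T -> corr Phi i r = 0.
    move=> i hi.
    apply: (@normal_real _ _ (norm2sq (Phi *m delta_mx i 0))); first exact: norm2sq_ge0.
    move=> e.
    have hsup : forall j, j \notin Tk -> (xk + e *: delta_mx i 0) j 0 = 0.
      move=> j hj; rewrite !mxE xsupp // add0r.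
      have : j != i by apply: contraNneq hj => ->; rewrite inE.
      by move/negbTE => ->; rewrite mulr0.
    have := xmin _ hsup.
    rewrite resid_shift [norm2sq (r - _)]norm2sqB norm2sqZ dotZl -corrE => h.
    have h2 : norm2sq r <= norm2sq r - 2 * (e * corr Phi i r) + e ^+ 2 * norm2sq (Phi *m delta_mx i 0) := h.
    lra.
  have ht1 : (k < size T)%N by rewrite hsize.
  have htake : take k.+1 T = rcons (take k T) t by rewrite (take_nth i0 ht1).
  set ct := corr Phi t r.
  have hphit : norm2sq (Phi *m delta_mx t 0) <= 1 + delta.
    apply: le_trans (ripU _ _) _; last by rewrite norm_delta mulr1.
    apply: (@sparse_sub _ _ _ _ [set t]); last by rewrite cards1 muln_gt0.
    by move=> i; rewrite in_set1 !mxE => /negbTE ->.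
  pose w' := xk + (ct / (1 + delta)) *: delta_mx t 0.
  have hdec : norm2sq (y - Phi *m w') <= norm2sq r - ct ^+ 2 / (1 + delta).
    rewrite /w' resid_shift [norm2sq (r - _)]norm2sqB norm2sqZ dotZl -corrE -/ct.
    by apply: decrease_real => //; exact: norm2sq_ge0.
  have hct : (1 - s) * ct ^+ 2 <= ct ^+ 2 / (1 + delta).
    rewrite ler_pdivlMr //.
    have h0 : 0 <= ct ^+ 2 by apply: sqr_ge0.
    have h1 : 0 <= delta * s by apply: mulr_ge0; lra.
    have -> : (1 - s) * ct ^+ 2 * (1 + delta) = ct ^+ 2 * ((1 - s) * (1 + delta)) by ring.
    rewrite -[X in _ <= X]mulr1; apply: ler_wpM2l => //.
    have -> : (1 - s) * (1 + delta) = 1 + delta - s - s * delta by ring.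
    have : 0 <= s * delta by rewrite mulrC.
    lra.
  have hstep : A * b k <= ct ^+ 2.
    set z := x - xk.
    set G := S :\: Tk.
    have hTk : (#|Tk| <= k)%N.
      by rewrite /Tk cardsE; apply: leq_trans (card_size _) _; rewrite size_takel // ltnW.
    have hG : (K - k <= #|G|)%N.
      rewrite /G cardsD hS; apply: leq_sub2l.
      by apply: leq_trans hTk; apply: subset_leq_card; apply: subsetIr.
    have hzG : forall i, i \in G -> z i 0 = x i 0.
      move=> i; rewrite inE => /andP[hi _].
      by rewrite /z !mxE xsupp // subr0.
    have hzsp : sparse (2 * K) z.
      apply: (@sparse_sub _ _ _ _ (S :|: Tk)).
        move=> i; rewrite inE negb_or => /andP[hiS hiT].
        by rewrite /z !mxE hxS // xsupp // subr0.
      apply: leq_trans (_ : #|S| + #|Tk| <= 2 * K)%N.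
        by rewrite cardsU leq_subr.
      by rewrite hS mul2n -addnn leq_add2l (leq_trans hTk) // ltnW.
    have hNz := lowz z G hzG (subsetDl _ _).
    have hE2 := ripL z hzsp.
    have hr : r = Phi *m z + v.
      by rewrite /r /y /z mulmxBr addrAC.
    have hX : \sum_i z i 0 * corr Phi i r = norm2sq (Phi *m z) + dot (Phi *m z) v.
      by rewrite sum_corr hr dotC dotDl norm2sqE (dotC v).
    have hXM : \sum_i z i 0 * corr Phi i r <= #|G|%:R * a0 * `|ct|.
      rewrite -mulrA -sum_if; apply: ler_sum => i _.
      have hM0 : 0 <= a0 * `|ct| by apply: mulr_ge0; [exact: ltW | exact: normr_ge0].
      case: (boolP (i \in take k T)) => hiT.
        rewrite hnorm // mulr0; case: ifP => //.
      have hzi : z i 0 = x i 0 by rewrite /z !mxE xsupp ?inE // subr0.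
      case: (boolP (i \in S)) => hiS; last first.
        by rewrite hzi hxS // mul0r; case: ifP.
      have -> : (i \in G) = true by rewrite inE hiS andbT inE.
      apply: le_trans (ler_norm _) _.
      rewrite normrM hzi /a0 (heq _ _ hiS hi0).
      by apply: ler_wpM2l; [exact: normr_ge0 | exact: hmax].
    have := @step_core R s A a0 #|G|%:R K%:R (q k) (norm2sq (Phi *m z))
       (dot (Phi *m z) v) V _ `|ct| s0 s1 erefl a00 _ (ler0n _ _) _ (aux_q0 R hk) (normr_ge0 _)
       _ _ (dot_amgm _ _ (mulr_gt0 s0 (aux_q0 R hk))) hX hXM.
    rewrite real_normK ?num_real //; apply.
    - by rewrite ler1n; apply: leq_trans hG; rewrite subn_gt0.
    - by apply: aux_q => //; rewrite ler_nat.
    - rewrite -mulrA; apply: (@aux_E2 _ _ delta _ (norm2sq z)) => //.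
      by apply: mulr_ge0; [exact: ler0n | exact: ltW].
    -       apply: (@aux_V _ s delta K%:R A V P s0 _ d1 hV hP).
      by apply: mulr_ge0; [exact: ler0n | exact: ltW].
  exists w'; split.
    move=> i; rewrite inE htake mem_rcons in_cons negb_or => /andP[hit hik].
    rewrite /w' !mxE xsupp ?inE // add0r (negbTE hit) mulr0 //.
  rewrite big_ord_recr /=.
  have : (1 - s) * (A * b k) <= (1 - s) * ct ^+ 2 by apply: ler_wpM2l => //; lra.
  lra.
have [w [wsupp wbound]] := inv K (leqnn K).
move: wsupp; rewrite -{1}hsize take_size => wsupp.
set TS := [set i in T] in wsupp *.
set z := x - w.
set Gf := S :\: TS.
have hTS : (#|TS| <= K)%N by rewrite /TS cardsE -hsize card_size.
have hcount : (#|TS :\: S| <= #|Gf|)%N.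
  rewrite /Gf !cardsD hS setIC; apply: leq_sub2r => //.
have hzG : forall i, i \in Gf -> z i 0 = x i 0.
  move=> i; rewrite inE => /andP[hi _].
  by rewrite /z !mxE wsupp // subr0.
have hzsp : sparse (2 * K) z.
  apply: (@sparse_sub _ _ _ _ (S :|: TS)).
    move=> i; rewrite inE negb_or => /andP[hiS hiT].
    by rewrite /z !mxE hxS // wsupp // subr0.
  apply: leq_trans (_ : #|S| + #|TS| <= 2 * K)%N.
    by rewrite cardsU leq_subr.
  by rewrite hS mul2n -addnn leq_add2l.
have hNz := lowz z Gf hzG (subsetDl _ _).
have hE2 := ripL z hzsp.
have hres : y - Phi *m w = Phi *m z + v by rewrite /y /z mulmxBr addrAC.
have hlow : (1 - s) * norm2sq (Phi *m z) - V / s <= norm2sq (y - Phi *m w).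
  rewrite hres norm2sqD.
  exact: (@aux_res R s _ _ V s0 V0 (dot_amgm (Phi *m z) v s0)).
have hup : norm2sq y <= P + s * P + V / s + V.
  rewrite /y norm2sqD.
  have := dot_amgm_up (Phi *m x) v s0.
  rewrite -/P -/V => h.
  have -> : P + s * P + V / s + V = P + (s * P + V / s) + V by ring.
  by rewrite lerD2r lerD2l.
have hSB := sum_b K (ltW s0).
have hwc : #|Gf|%:R <= 20 * s * K%:R.
  apply: (@final_arith R s A K%:R #|Gf|%:R P V (norm2sq (Phi *m z)) (norm2sq z)
     (norm2sq y) (norm2sq (y - Phi *m w)) (\sum_(j < K) b j)) => //.
  - by rewrite ltr0n.
  - by rewrite ler_nat -hS subset_leq_card // subsetDl.
  - exact: norm2sq_ge0.
  - by rewrite ss -mulrA.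
  - by rewrite ss.
rewrite ler_pdivrMr ?ltr0n //.
by apply: le_trans hwc; rewrite ler_nat.
Qed.
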